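(* There exists a natural number $n_0$ such that for every natural number $n\ge n_0$ there exists a self-adjoint projection $E\in M_n(\mathbb{C})$ such that $3n^{-1/2}(2E-I)$ is not an element of the closed convex hull $\mathcal{C}$ of the set $\{R\circ C: R,C\in M_n(\mathbb{C}),\ \|R\|_r\le1,\ \|C\|_c\le1\}$.
   Context: $R\circ C$ is the entrywise Schur product $(r_{ij}c_{ij})$; $I$ is the identity matrix. $\|R\|_r:=\max_i(\sum_j|r_{ij}|^2)^{1/2}$ and $\|C\|_c:=\max_j(\sum_i|c_{ij}|^2)^{1/2}$. *)

(* Defs.v *)
From mathcomp Require Import all_boot all_order all_algebra.
From mathcomp Require Import reals Rstruct.
From mathcomp Require Export complex.
Set Implicit Arguments. Unset Strict Implicit. Unset Printing Implicit Defensive.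
Import Order.TTheory GRing.Theory Num.Theory.
Local Open Scope ring_scope.

Notation RR := Rdefinitions.R.
Notation CC := (Rdefinitions.R[i]).

Definition cabs (z : CC) : RR := Normc.normc z.

Definition row_norm (n : nat) (M : 'M[CC]_n) : RR :=
  \big[Num.max/0]_(i < n) Num.sqrt (\sum_(j < n) cabs (M i j) ^+ 2).

Definition col_norm (n : nat) (M : 'M[CC]_n) : RR :=
  \big[Num.max/0]_(j < n) Num.sqrt (\sum_(i < n) cabs (M i j) ^+ 2).

Definition schur (n : nat) (A B : 'M[CC]_n) : 'M[CC]_n :=
  \matrix_(i, j) (A i j * B i j).

Definition schur_set (n : nat) (X : 'M[CC]_n) : Prop :=
  exists A B : 'M[CC]_n,
    row_norm A <= 1 /\ col_norm B <= 1 /\ X = schur A B.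

Definition conv_hull (n : nat) (S : 'M[CC]_n -> Prop) (X : 'M[CC]_n) : Prop :=
  exists (k : nat) (w : 'I_k -> RR) (P : 'I_k -> 'M[CC]_n),
    (forall i, 0 <= w i) /\ \sum_(i < k) w i = 1 /\
    (forall i, S (P i)) /\ X = \sum_(i < k) ((w i)%:C)%C *: P i.

(* topological closure in M_n(C) (finite-dimensional: all norms equivalent;
   we use the entrywise max norm) *)
Definition mx_closure (n : nat) (S : 'M[CC]_n -> Prop) (X : 'M[CC]_n) : Prop :=
  forall eps : RR, 0 < eps ->
    exists Y, S Y /\ forall i j, cabs (X i j - Y i j) < eps.

Definition calC (n : nat) : 'M[CC]_n -> Prop :=
  mx_closure (conv_hull (@schur_set n)).

Definition adjmx (n : nat) (E : 'M[CC]_n) : 'M[CC]_n := (map_mx (@conjc _) E)^T.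

Definition sa_projection (n : nat) (E : 'M[CC]_n) : Prop :=
  E *m E = E /\ adjmx E = E.

(* Main.v *)
Require Import Defs.
From mathcomp Require Import all_boot all_order all_algebra all_solvable all_field.
From mathcomp Require Import reals Rstruct complex.
Import Order.TTheory GRing.Theory Num.Theory.
Local Open Scope ring_scope.

Lemma cabsE (z : CC) : ((cabs z)%:C)%C = `|z|.
Proof. by case: z. Qed.
Lemma cabs_ge0 (z : CC) : 0 <= cabs z.
Proof. by rewrite -ler0c cabsE normr_ge0. Qed.
Lemma cabsM (x y : CC) : cabs (x * y) = cabs x * cabs y.
Proof. by apply: complexI; rewrite rmorphM /= !cabsE normrM. Qed.
Lemma cabsD (x y : CC) : cabs (x + y) <= cabs x + cabs y.
Proof. by rewrite -lecR rmorphD /= !cabsE ler_normD. Qed.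
Lemma cabsJ (x : CC) : cabs (x^*)%C = cabs x.
Proof. by apply: complexI; rewrite !cabsE normcJ. Qed.
Lemma cabs_real (r : RR) : cabs (r%:C)%C = `|r|.
Proof. by rewrite /cabs /Normc.normc /= expr0n /= addr0 sqrtr_sqr. Qed.
Lemma cabs_sqr (z : CC) : ((cabs z ^+ 2)%:C)%C = z * (z^*)%C.
Proof. by rewrite rmorphXn /= cabsE sqr_normc. Qed.
Lemma cabs_sum k (F : 'I_k -> CC) : cabs (\sum_(i < k) F i) <= \sum_(i < k) cabs (F i).
Proof.
rewrite -lecR rmorph_sum /= (cabsE (\sum_(i < k) F i)). under eq_bigr do rewrite cabsE.
exact: ler_norm_sum.
Qed.

From mathcomp Require Import ring lra.

Definition aa : CC := Complex (2^-1) (- 2^-1).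
Lemma aa_sq : aa ^+ 2 + (aa^*)%C ^+ 2 = 0.
Proof. rewrite /aa !expr2 /=. simpc. apply/eqP; rewrite eq_complex /=; apply/andP; split; apply/eqP; ring. Qed.
Lemma aa_n : aa * (aa^*)%C *+ 2 = 1.
Proof. rewrite /aa /=. simpc. apply/eqP; rewrite eq_complex /=; apply/andP; split; apply/eqP. by lra. by rewrite addr0. Qed.
Lemma cabs_aa : cabs aa <= 1.
Proof.
rewrite /cabs /Normc.normc /aa /=.
have h : 0 <= 2^-1 ^+ 2 + (- 2^-1) ^+ 2 :> RR by rewrite addr_ge0 ?sqr_ge0.
apply: (@le_trans _ _ (Num.sqrt 1)); last by rewrite sqrtr1.
rewrite ler_sqrt // sqrrN expr2; lra.
Qed.
Lemma cabsX (x : CC) k : cabs (x ^+ k) = cabs x ^+ k.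
Proof. elim: k => [|k IH]; first by rewrite !expr0 /cabs /Normc.normc /= expr0n /= expr1n addr0 sqrtr1.
by rewrite !exprS cabsM IH. Qed.

Lemma sumX n (x : CC) : x ^+ n = 1 -> \sum_(k < n) x ^+ k = if x == 1 then n%:R else 0.
Proof.
move=> xn; case: eqP => [->|/eqP x1].
  by under eq_bigr do rewrite expr1n; rewrite sumr_const card_ord.
have : (x - 1) * \sum_(k < n) x ^+ k = 0 by rewrite -subrX1 xn subrr.
by move/eqP; rewrite mulf_eq0 subr_eq0 (negbTE x1) /= => /eqP.
Qed.

Lemma pair1 (x y : CC) : x * y = 1 -> (x == 1) = (y == 1).
Proof.
move=> xy; apply/eqP/eqP => [x1|y1].
  by rewrite x1 mul1r in xy.
by rewrite y1 mulr1 in xy.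
Qed.

Section Fourier.
Variables (n : nat) (w : CC).
Hypothesis n_gt0 : (0 < n)%N.
Hypothesis wprim : n.-primitive_root w.

Lemma w_n : w ^+ n = 1.
Proof. exact: prim_expr_order. Qed.

Lemma normw : `|w| = 1.
Proof.
apply/eqP; rewrite -(pexpr_eq1 n_gt0) ?normr_ge0 // -normrX w_n normr1 //.
Qed.

Lemma wJ : w * (w^*)%C = 1.
Proof. by rewrite -sqr_normc normw expr1n. Qed.

Local Notation b := (w^*)%C.

Lemma b_n : b ^+ n = 1.
Proof. by rewrite -rmorphXn w_n rmorph1. Qed.

Lemma eqw (j l : 'I_n) : (w ^+ j * b ^+ l == 1) = (j == l).
Proof.
have wl : w ^+ l * b ^+ l = 1 by rewrite -exprMn wJ expr1n.
apply/eqP/eqP => [h|->//].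
have : w ^+ j = w ^+ l.
  by rewrite -[LHS]mulr1 -wl mulrA mulrAC h mul1r.
move/eqP; rewrite (eq_prim_root_expr wprim) !modn_small // => /eqP.
exact: val_inj.
Qed.

Lemma eqw' (j l : 'I_n) : (b ^+ j * w ^+ l == 1) = (j == l).
Proof. by rewrite mulrC eqw eq_sym. Qed.

Definition G : 'M[CC]_n := \matrix_(j, k) (aa * (w ^+ j) ^+ k + (aa^*)%C * (b ^+ j) ^+ k).

Lemma GG : G *m G = (n%:R)%:M.
Proof.
apply/matrixP => j l; rewrite !mxE.
have e : forall k : 'I_n, G j k * G k l =
   aa ^+ 2 * (w ^+ j * w ^+ l) ^+ k + (aa^*)%C ^+ 2 * (b ^+ j * b ^+ l) ^+ k
   + aa * (aa^*)%C * ((w ^+ j * b ^+ l) ^+ k + (b ^+ j * w ^+ l) ^+ k).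
  move=> k; rewrite !mxE !exprMn (exprAC w k l) (exprAC b k l).
  ring.
rewrite (eq_bigr _ (fun k _ => e k)) !big_split -!mulr_sumr big_split.
have X1 : forall x y : CC, x ^+ n = 1 -> y ^+ n = 1 -> (x * y) ^+ n = 1.
  by move=> x y hx hy; rewrite exprMn hx hy mulr1.
have wn := w_n; have bn := b_n.
have wj : forall m, (w ^+ m) ^+ n = 1 by move=> m; rewrite exprAC wn expr1n.
have bj : forall m, (b ^+ m) ^+ n = 1 by move=> m; rewrite exprAC bn expr1n.
rewrite !sumX ?X1 // eqw eqw'.
have -> : (b ^+ j * b ^+ l == 1) = (w ^+ j * w ^+ l == 1).
  apply: pair1; rewrite mulrACA -!exprMn [b * w]mulrC wJ !expr1n mulr1 //.
rewrite (eq_sym j l) -eqw.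
move: aa_sq aa_n; set c := (aa^*)%C => hsq hn.
have h2 : aa * c = 2^-1.
  by apply: (@mulIf _ 2); rewrite ?pnatr_eq0 // mulVf ?pnatr_eq0 // mulr_natr hn.
have hc2 : c ^+ 2 = - aa ^+ 2 by apply/eqP; rewrite -addr_eq0 addrC hsq.
case: (_ == 1); case: (_ == 1) => /=; rewrite hc2 h2; field; rewrite ?pnatr_eq0 //.
Qed.

Lemma GJ (j k : 'I_n) : ((G j k)^*)%C = G k j.
Proof.
rewrite !mxE rmorphD !rmorphM !rmorphXn /= conjcK (exprAC w j k) (exprAC b j k).
by rewrite opprK addrC.
Qed.

Lemma adjG : adjmx G = G.
Proof. by apply/matrixP => j l; rewrite /adjmx mxE mxE GJ. Qed.

Lemma cabsw : cabs w = 1.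
Proof. by apply: complexI; rewrite cabsE normw. Qed.

Lemma Gbound (j k : 'I_n) : cabs (G j k) <= 2.
Proof.
rewrite mxE; apply: le_trans (cabsD _ _) _.
rewrite !cabsM !cabsX !cabsJ !cabsw !expr1n !mulr1.
have := cabs_aa; lra.
Qed.

Lemma Gsq : \sum_(j < n) \sum_(k < n) cabs (G j k) ^+ 2 = n%:R * n%:R.
Proof.
apply: complexI; rewrite rmorph_sum /=.
under eq_bigr => j _ do (rewrite rmorph_sum /=; under eq_bigr => k _ do rewrite cabs_sqr GJ).
have e : forall j, \sum_(k < n) G j k * G k j = (G *m G) j j.
  by move=> j; rewrite mxE.
under eq_bigr => j _ do rewrite e GG mxE eqxx mulr1n.
by rewrite sumr_const card_ord rmorphM /= rmorph_nat mulr_natr.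
Qed.
End Fourier.

Definition l1 {n} (X : 'M[CC]_n) : RR := \sum_(i < n) \sum_(j < n) cabs (X i j).

Lemma row_le n (A : 'M[CC]_n) i : row_norm A <= 1 -> \sum_(j < n) cabs (A i j) ^+ 2 <= 1.
Proof.
move=> H.
have h := le_bigmax 0 (fun i => Num.sqrt (\sum_(j < n) cabs (A i j) ^+ 2)) i.
have S0 : 0 <= \sum_(j < n) cabs (A i j) ^+ 2 by apply: sumr_ge0 => j _; apply: sqr_ge0.
rewrite -(sqr_sqrtr S0); apply: exprn_ile1; first exact: sqrtr_ge0.
exact: le_trans h H.
Qed.

Lemma col_le n (A : 'M[CC]_n) j : col_norm A <= 1 -> \sum_(i < n) cabs (A i j) ^+ 2 <= 1.
Proof.
move=> H.
have h := le_bigmax 0 (fun j => Num.sqrt (\sum_(i < n) cabs (A i j) ^+ 2)) j.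
have S0 : 0 <= \sum_(i < n) cabs (A i j) ^+ 2 by apply: sumr_ge0 => i _; apply: sqr_ge0.
rewrite -(sqr_sqrtr S0); apply: exprn_ile1; first exact: sqrtr_ge0.
exact: le_trans h H.
Qed.

Lemma schur_l1 n (A B : 'M[CC]_n) : row_norm A <= 1 -> col_norm B <= 1 -> l1 (schur A B) <= n%:R.
Proof.
move=> hA hB; rewrite /l1.
apply: (@le_trans _ _ (\sum_(i < n) \sum_(j < n) (2^-1 * (cabs (A i j) ^+ 2 + cabs (B i j) ^+ 2)))).
  apply: ler_sum => i _; apply: ler_sum => j _; rewrite mxE cabsM.
  have := cabs_ge0 (A i j); have := cabs_ge0 (B i j).
  move: (cabs (A i j)) (cabs (B i j)) => x y hx hy.
  have : 0 <= (x - y) ^+ 2 by apply: sqr_ge0.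
  rewrite !expr2; nra.
under eq_bigr do rewrite -mulr_sumr big_split /=.
rewrite -mulr_sumr big_split /= [X in _ + X]exchange_big /=.
have h1 : \sum_(i < n) \sum_(j < n) cabs (A i j) ^+ 2 <= n%:R.
  rewrite -[n in n%:R]card_ord -sumr_const; apply: ler_sum => i _; exact: row_le.
have h2 : \sum_(j < n) \sum_(i < n) cabs (B i j) ^+ 2 <= n%:R.
  rewrite -[n in n%:R]card_ord -sumr_const; apply: ler_sum => j _; exact: col_le.
lra.
Qed.

Lemma hull_l1 n (X : 'M[CC]_n) : conv_hull (@schur_set n) X -> l1 X <= n%:R.
Proof.
case=> k [w [P [w0 [w1 [SP ->]]]]].
have hP : forall t, l1 (P t) <= n%:R.
  by move=> t; have [A [B [hA [hB ->]]]] := SP t; exact: schur_l1.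
apply: (@le_trans _ _ (\sum_(t < k) w t * l1 (P t))); last first.
  apply: (@le_trans _ _ (\sum_(t < k) w t * n%:R)).
    by apply: ler_sum => t _; apply: ler_wpM2l.
  by rewrite -mulr_suml w1 mul1r.
apply: (@le_trans _ _ (\sum_(i < n) \sum_(j < n) \sum_(t < k) w t * cabs (P t i j))).
  apply: ler_sum => i _; apply: ler_sum => j _; rewrite summxE.
  apply: le_trans (cabs_sum _ _) _; apply: ler_sum => t _.
  by rewrite mxE cabsM cabs_real ger0_norm.
under eq_bigr => i _ do rewrite exchange_big /=.
rewrite exchange_big /=; apply: ler_sum => t _.
rewrite /l1 mulr_sumr; apply: ler_sum => i _.
by rewrite mulr_sumr.
Qed.

Lemma calC_l1 n (X : 'M[CC]_n) (eps : RR) : 0 < eps -> calC X -> l1 X <= n%:R + n%:R * n%:R * eps.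
Proof.
move=> e0 /(_ eps e0) [Y [hY hXY]].
have := @hull_l1 n Y hY.
have : l1 X <= l1 Y + \sum_(i < n) \sum_(j < n) eps.
  rewrite /l1 -big_split; apply: ler_sum => i _; rewrite -big_split; apply: ler_sum => j _ /=.
  have -> : X i j = Y i j + (X i j - Y i j) by rewrite addrC subrK.
  apply: le_trans (cabsD _ _) _.
  by apply: lerD => //; apply: ltW.
rewrite !sumr_const !card_ord -[eps *+ n *+ n]mulr_natr -[eps *+ n]mulr_natr => h1 h2.
apply: le_trans h1 _; apply: lerD => //; by rewrite mulrC mulrA mulrAC.
Qed.

Lemma CC_prim_root_exists n : (n > 0)%N -> exists z : CC, n.-primitive_root z.
Proof.
pose p : {poly CC} := 'X^n - 1; have [r Dp] := closed_field_poly_normal p.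
move=> n_gt0; rewrite (monicP _) ?monicXnsubC // scale1r in Dp.
have rn1: all n.-unity_root r by apply/allP=> z; rewrite -root_prod_XsubC -Dp.
have sz_r: (n < (size r).+1)%N.
  by rewrite -(size_prod_XsubC r id) -Dp size_XnsubC.
have [|z] := hasP (has_prim_root n_gt0 rn1 _ sz_r); last by exists z.
by rewrite -separable_prod_XsubC -Dp separable_Xn_sub_1 // pnatr_eq0 -lt0n.
Qed.

Lemma adjmxD n (A B : 'M[CC]_n) : adjmx (A + B) = adjmx A + adjmx B.
Proof. by apply/matrixP => i j; rewrite /adjmx !mxE rmorphD. Qed.
Lemma adjmxZ n (a : CC) (A : 'M[CC]_n) : adjmx (a *: A) = (a^*)%C *: adjmx A.
Proof. by apply/matrixP => i j; rewrite /adjmx !mxE rmorphM. Qed.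
Lemma adjmx1 n : adjmx (1%:M : 'M[CC]_n) = 1%:M.
Proof. by apply/matrixP => i j; rewrite /adjmx !mxE eq_sym rmorphMn rmorph1. Qed.

Theorem mainTheorem6 :
  exists n0 : nat, forall n : nat, (n0 <= n)%N ->
    exists E : 'M[CC]_n, sa_projection E /\
      ~ calC ((((3 : RR) / Num.sqrt (n%:R : RR))%:C)%C *: (2%:R *: E - 1%:M)).
Proof.
exists 1%N => n n1.
have [w wprim] := CC_prim_root_exists n n1.
have hGG := GG _ _ n1 wprim; have hadj := adjG n w.
have hGb := Gbound _ _ n1 wprim; have hGsq := Gsq _ _ n1 wprim.
move: (G n w) hGG hadj hGb hGsq => G hGG hadj hGb hGsq.
have n0 : (0 : RR) < n%:R by rewrite ltr0n.
set sq := Num.sqrt (n%:R : RR).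
have sq0 : 0 < sq by rewrite sqrtr_gt0.
have sqsq : sq * sq = n%:R by rewrite -expr2 sqr_sqrtr // ltW.
set s : CC := ((sq^-1)%:C)%C.
have hs : s * s * n%:R = 1.
  have e : (((sq^-1 * sq^-1 * n%:R)%:C)%C : CC) = s * s * n%:R by rewrite !rmorphM /= rmorph_nat.
  rewrite -e -sqsq.
  have -> : sq^-1 * sq^-1 * (sq * sq) = 1 by field; rewrite gt_eqF.
  by [].
set P := s *: G.
have hP : P *m P = 1%:M.
  by rewrite /P -scalemxAl -scalemxAr scalerA hGG -scalemx1 scalerA hs scale1r.
set E := (2^-1 : CC) *: (1%:M + P).
have h2 : (2 : CC) != 0 by rewrite pnatr_eq0.
have hE : 2%:R *: E - 1%:M = P.
  by rewrite /E scalerA mulfV // scale1r addrC addKr.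
exists E; split; first split.
- rewrite /E -scalemxAl -scalemxAr scalerA mulmxDl !mulmxDr mul1mx mulmx1 hP.
  rewrite !mul1mx (addrC P 1%:M) -mulr2n -scalerMnr scalerMnl; congr (_ *: _).
  by field.
- rewrite /E adjmxZ adjmxD adjmx1 /P adjmxZ hadj /s conjc_real.
  by rewrite conjc_inv conjc_nat.
rewrite hE => hC.
have heps : (0 : RR) < (n%:R * 4)^-1 by rewrite invr_gt0 mulr_gt0.
have hup := @calC_l1 n _ _ heps hC.
set S := \sum_(i < n) \sum_(j < n) cabs (G i j).
set c := 3 / sq * sq^-1.
have c0 : 0 <= c by rewrite /c !mulr_ge0 ?invr_ge0 ?ltW.
have hl : l1 (((3 / sq)%:C)%C *: P) = c * S.
  rewrite /l1 /S mulr_sumr; apply: eq_bigr => i _; rewrite mulr_sumr; apply: eq_bigr => j _.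
  rewrite /P !mxE !cabsM /s !cabs_real !ger0_norm ?mulrA // ?invr_ge0 ?ltW //.
  by rewrite divr_gt0.
have hS : n%:R * n%:R <= 2 * S.
  rewrite -hGsq /S mulr_sumr; apply: ler_sum => i0 _; rewrite mulr_sumr; apply: ler_sum => j0 _.
  by rewrite expr2 mulrC; apply: ler_wpM2r; [apply: cabs_ge0 | apply: hGb].
have hc : c * n%:R = 3 by rewrite /c -sqsq; field; rewrite gt_eqF.
have h3 : (3 : RR) * n%:R <= 2 * (c * S).
  rewrite mulrCA -hc -mulrA; apply: ler_wpM2l => //.
have he : n%:R * n%:R * (n%:R * 4)^-1 = n%:R / 4 :> RR by field; rewrite gt_eqF.
rewrite hl he in hup.
move: h3 hup n0; move: (c * S) (n%:R : RR) => x m h3 hup n0 {hl hS hc he c0}.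
have : (0:RR) < m by []. lra.
Qed.
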